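(* Suppose $\mathcal{U}$ is a compatible uniformity for a space $X$ and $\kappa$ is a cardinal. If $A\subseteq X$ is totally bounded and $\mathcal{U}$ (ordered by reverse inclusion) has calibre $(\kappa^+,\omega)$, then $w(A)\le\kappa$.
   Context: All spaces are Tychonoff. A subset $A$ is totally bounded if for every $U\in\mathcal{U}$ there is finite $F\subseteq A$ with $A\subseteq\bigcup_{x\in F}U[x]$, where $U[x]=\{y:(x,y)\in U\}$. A directed set $P$ has calibre $(\mu,\lambda)$ if every subset of $P$ of size $\mu$ contains a subset of size $\lambda$ with an upper bound in $P$. $w(A)$ is the weight (least size of a base) of $A$ as a subspace. *)

(* Defs.v *)
From HB Require Import structures.
From mathcomp Require Import all_boot all_order all_algebra.
From mathcomp Require Import all_classical all_reals all_analysis.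
Set Implicit Arguments. Unset Strict Implicit. Unset Printing Implicit Defensive.
Local Open Scope classical_set_scope.
Local Open Scope card_scope.

(* The cardinal kappa is represented by a type K (kappa = |K|). *)

(* |S| = kappa^+  : kappa < |S| and every subset of S has size <= kappa
   or size |S|  (i.e. |S| is the least cardinal above kappa). *)
Definition card_succ_of {T : Type} (K : Type) (S : set T) : Prop :=
  ~ (S #<= [set: K]) /\
  (forall S' : set T, S' `<=` S -> S' #<= [set: K] \/ S' #= S).

Definition countably_infinite {T : Type} (S : set T) : Prop :=
  S #= [set: nat].

Definition entourage_at {X : Type} (U : set (X * X)) (x : X) : set X :=
  [set y | U (x, y)].

Definition totally_bounded_set {X : uniformType} (A : set X) : Prop :=
  forall U, entourage U ->
    exists F : set X, [/\ finite_set F, F `<=` A &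
      A `<=` \bigcup_(x in F) entourage_at U x].

(* the uniformity, ordered by reverse inclusion, has calibre (kappa^+, omega):
   every subset S of size kappa^+ contains a countably infinite subset T with
   an upper bound W (i.e. W in U with W `<=` V for all V in T). *)
Definition uniformity_calibre_succ_omega (X : uniformType) (K : Type) : Prop :=
  forall S : set (set (X * X)), S `<=` entourage -> card_succ_of K S ->
    exists T : set (set (X * X)), [/\ T `<=` S, countably_infinite T &
      exists W, entourage W /\ forall V, T V -> W `<=` V].

Definition subspace_base {X : topologicalType} (A : set X) (B : set (set X)) : Prop :=
  (forall b, B b -> exists O : set X, open O /\ b = A `&` O) /\
  (forall O : set X, open O -> forall x, A x -> O x ->
     exists b, [/\ B b, b x & b `<=` A `&` O]).

Definition weight_le {X : topologicalType} (A : set X) (K : Type) : Prop :=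
  exists B : set (set X), subspace_base A B /\ B #<= [set: K].

(* Main.v *)
Require Import Defs.
From mathcomp Require Import all_boot all_order all_algebra.
From mathcomp Require Import all_classical all_reals all_analysis.
From mathcomp Require Import wochoice.
Set Implicit Arguments. Unset Strict Implicit. Unset Printing Implicit Defensive.
Local Open Scope classical_set_scope.
Local Open Scope card_scope.

Lemma inj_le {T U} (A : set T) (B : set U) (f : T -> U) :
  {in A &, injective f} -> f @` A `<=` B -> A #<= B.
Proof.
move=> fi fAB; rewrite -(card_le_eql (inj_card_eq fi)).
exact: subset_card_le.
Qed.

Lemma le_funP {T} {U : pointedType} (A : set T) (B : set U) :
  A #<= B -> exists f : T -> U, {in A &, injective f} /\ f @` A `<=` B.
Proof.
move=> /pcard_leP [f]; exists f; split.
  by move=> x y xA yA; apply: inj; rewrite ?inE; apply: set_mem.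
by move=> _ [x xA <-]; apply: funS.
Qed.

Lemma le_fun {T U} (A : set T) (B : set U) (a0 : T) : A a0 ->
  A #<= B -> exists f : T -> U, {in A &, injective f} /\ f @` A `<=` B.
Proof.
elim/Ppointed: U B => U B Aa0 AB.
  by move: AB; rewrite card_le_emptyr => /eqP A0; rewrite A0 in Aa0.
exact: le_funP.
Qed.

Section WO.
Variable T : choiceType.
Definition wor : rel T := proj1_sig (well_ordering_principle T).
Lemma wor_wo : well_order wor.
Proof. exact: proj2_sig (well_ordering_principle T). Qed.

Lemma wor_min (P : set T) : P !=set0 -> exists z, P z /\ forall y, P y -> wor z y.
Proof.
move=> [x Px].
have [|z [[zA zlb] _]] := @wor_wo (fun y => `[< P y >]).
  by exists x; rewrite inE.
exists z; split; first by move: zA; rewrite inE.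
by move=> y Py; apply: zlb; rewrite inE.
Qed.

Lemma wor_total x y : wor x y \/ wor y x.
Proof.
have [z [[->|->] zm]] := @wor_min [set w | w = x \/ w = y] (ex_intro _ x (or_introl erefl)).
  by left; apply: zm; right.
by right; apply: zm; left.
Qed.

Lemma wor_refl x : wor x x.
Proof. by case: (wor_total x x). Qed.

Lemma wor_anti x y : wor x y -> wor y x -> x = y.
Proof.
move=> xy yx.
have [|z [[zA zlb] zu]] := @wor_wo (fun w => (w == x) || (w == y)).
  by exists x; rewrite /in_mem /= eqxx.
have Hx : minimum_of wor (fun w => (w == x) || (w == y)) x.
  split; first by rewrite /in_mem /= eqxx.
  by move=> w; rewrite /in_mem /= => /orP[/eqP->|/eqP->] //; exact: wor_refl.
have Hy : minimum_of wor (fun w => (w == x) || (w == y)) y.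
  split; first by rewrite /in_mem /= eqxx orbT.
  by move=> w; rewrite /in_mem /= => /orP[/eqP->|/eqP->] //; exact: wor_refl.
by rewrite -(zu _ Hx) -(zu _ Hy).
Qed.

Lemma wor_trans x y z : wor x y -> wor y z -> wor x z.
Proof.
move=> xy yz.
have [w [Pw wm]] := @wor_min [set w | w = x \/ w = y \/ w = z] (ex_intro _ x (or_introl erefl)).
case: Pw => [wx|[wy|wz]]; subst w; first by apply: wm; right; right.
  by rewrite (wor_anti xy (wm _ (or_introl erefl))).
have zy := wm y (or_intror (or_introl erefl)).
by rewrite -(wor_anti yz zy).
Qed.

Definition wlt x y := wor x y /\ x <> y.

Lemma wlt_trans x y z : wlt x y -> wlt y z -> wlt x z.
Proof.
move=> [xy nxy] [yz nyz]; split; first exact: wor_trans yz.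
move=> exz; rewrite exz in xy; by apply: nyz; apply: wor_anti.
Qed.

Lemma wlt_total x y : x <> y -> wlt x y \/ wlt y x.
Proof.
by move=> nxy; case: (wor_total x y) => h; [left|right]; split => // /esym.
Qed.

Lemma wlt_irr x : ~ wlt x x.
Proof. by case. Qed.

Lemma wlt_wor x y : wlt x y -> ~ wor y x.
Proof. by move=> [xy nxy] yx; apply: nxy; apply: wor_anti. Qed.

Lemma wlt_wf : well_founded wlt.
Proof.
move=> x; apply: contrapT => nAx.
have [z [nAz zm]] := @wor_min [set y | ~ Acc wlt y] (ex_intro _ x nAx).
apply: nAz; constructor => y yz; apply: contrapT => nAy.
by apply: (wlt_wor yz); apply: zm.
Qed.

Lemma wlt_ind (P : T -> Prop) : (forall x, (forall y, wlt y x -> P y) -> P x) -> forall x, P x.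
Proof. by move=> H x; elim: (wlt_wf x) => y _ IH; apply: H. Qed.

End WO.

Section Succ.
Variables (T : choiceType) (K : Type).

Definition emin (P : set T) (d : T) : T :=
  xget d [set z | P z /\ forall y, P y -> wor z y].

Lemma eminP (P : set T) d : P !=set0 ->
  P (emin P d) /\ forall y, P y -> wor (emin P d) y.
Proof. by move=> /wor_min ex; apply: (xgetPex d ex). Qed.

Variables (S S' : set T).

Definition colF (s : T) (rec : forall t, wlt t s -> T) : T :=
  emin [set m | S m /\ forall t (h : wlt t s), S' t -> wlt (rec t h) m] s.

Definition col : T -> T := Fix (@wlt_wf T) (fun _ => T) colF.

Lemma col_eq s : col s =
  emin [set m | S m /\ forall t, wlt t s -> S' t -> wlt (col t) m] s.
Proof.
rewrite /col Fix_eq //= => x f g E; rewrite /colF; congr (emin _ x).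
apply/funext => m; apply/propext; split => -[Sm H]; split => // t h S't.
  by rewrite -E; exact: H.
by rewrite E; exact: H.
Qed.

Hypothesis S'S : S' `<=` S.

Lemma col_prop s : S' s ->
  [/\ S (col s), wor (col s) s & forall t, wlt t s -> S' t -> wlt (col t) (col s)].
Proof.
elim/wlt_ind: s => s IH S's.
set P := [set m | S m /\ forall t, wlt t s -> S' t -> wlt (col t) m].
have Ps : P s.
  split; first exact: S'S.
  move=> t ts S't; have [_ ctt _] := IH t ts S't; split.
    exact: wor_trans ctt (proj1 ts).
  by move=> cts; rewrite cts in ctt; apply: (wlt_wor ts).
have [[Pc1 Pc2] Pmin] := eminP s (ex_intro _ s Ps).
rewrite -col_eq in Pc1 Pc2 Pmin.
by split => //; apply: Pmin.
Qed.

Lemma col_inj : {in S' &, injective col}.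
Proof.
move=> s t; rewrite !inE => S's S't cst; apply: contrapT => nst.
have [st|ts] := wlt_total nst.
  by have [_ _ /(_ s st S's)] := col_prop S't; rewrite cst; apply: wlt_irr.
by have [_ _ /(_ t ts S't)] := col_prop S's; rewrite cst; apply: wlt_irr.
Qed.

Hypothesis segK : forall m, S m -> (S `&` [set t | wlt t m]) #<= [set: K].
Hypothesis S'K : ~ (S' #<= [set: K]).

Lemma col_surj m : S m -> exists s, S' s /\ col s = m.
Proof.
move=> Sm; apply: contrapT => nex.
have below : forall s, S' s -> wlt (col s) m.
  elim/wlt_ind => s IH S's.
  set P := [set m | S m /\ forall t, wlt t s -> S' t -> wlt (col t) m].
  have Pm : P m by split => // t ts S't; apply: IH.
  have [_ Pmin] := eminP s (ex_intro _ m Pm); rewrite -col_eq in Pmin.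
  split; first exact: Pmin.
  by move=> csm; apply: nex; exists s.
apply: S'K; apply: card_le_trans (segK Sm).
apply: (inj_le col_inj) => _ [s S's <-]; split; last exact: below.
by have [] := col_prop S's.
Qed.

Lemma collapse_le : S #<= S'.
Proof.
pose inv m := xget m [set s | S' s /\ col s = m].
have invP m : S m -> S' (inv m) /\ col (inv m) = m.
  by move=> Sm; exact: (xgetPex m (col_surj Sm)).
apply: (@inj_le _ _ _ _ inv).
  move=> x y; rewrite !inE => Sx Sy ixy.
  by rewrite -(invP x Sx).2 -(invP y Sy).2 ixy.
by move=> _ [m Sm <-]; exact: (invP m Sm).1.
Qed.

End Succ.

Lemma exists_succ (T : choiceType) (K : Type) (Z : set T) :
  ~ (Z #<= [set: K]) -> exists S, S `<=` Z /\ card_succ_of K S.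
Proof.
move=> ZK.
have core : forall S, S `<=` Z -> ~ (S #<= [set: K]) ->
    (forall m, S m -> (S `&` [set t | wlt t m]) #<= [set: K]) ->
    card_succ_of K S.
  move=> S SZ SK segK; split => // S' S'S.
  have [S'K|S'K] := pselect (S' #<= [set: K]); first by left.
  right; apply: Cantor_Bernstein; first exact: subset_card_le.
  exact: (collapse_le S'S segK S'K).
have [[m0 Hm0]|allK] := pselect (exists m, ~ ((Z `&` [set t | wlt t m]) #<= [set: K])).
  have [m [nm mmin]] := @wor_min T [set m | ~ ((Z `&` [set t | wlt t m]) #<= [set: K])]
    (ex_intro _ m0 Hm0).
  exists (Z `&` [set t | wlt t m]); split; first exact: subIsetl.
  apply: (core (Z `&` [set t | wlt t m])); [exact: subIsetl|exact: nm|].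
  move=> m' [Zm' m'm].
  have : (Z `&` [set t | wlt t m']) #<= [set: K].
    apply: contrapT => nK; exact: (wlt_wor m'm (mmin _ nK)).
  apply: card_le_trans; apply: subset_card_le => t [[Zt tm] tm']; split => //.
exists Z; split => //; apply: (core Z) => // m _.
have : (Z `&` [set t | wlt t m]) #<= [set: K].
  by apply: contrapT => nK; apply: allK; exists m.
by apply: card_le_trans; apply: subset_card_le => t [Zt tm].
Qed.


Definition pr (a b : nat) : nat := pickle (a, b).
Lemma pr_inj a b a' b' : pr a b = pr a' b' -> a = a' /\ b = b'.
Proof. by move=> /(pcan_inj pickleK_inv) [-> ->]. Qed.

Lemma absorb_nat (K : Type) : [set: nat] #<= [set: K] ->
  exists f : K * nat -> K, injective f.
Proof.
move=> NK.
have [b0 _] := le_fun (a0 := 0%N) I NK.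
pose k0 := b0 0%N.
pose D := [set C : set K | C #= [set: nat]].
have [E [ED trE maxE]] := ex_maximal_disjoint_subcollection (fun C : set K => C) D.
pose U := \bigcup_(C in E) C.
have finR : finite_set (~` U).
  apply: contrapT => /infiniteP NR.
  have [r [rinj rR]] := le_fun (a0 := 0%N) I NR.
  pose C' := r @` [set: nat].
  have C'D : D C' by exact: (inj_card_eq rinj).
  have C'R : C' `<=` ~` U by move=> _ [n _ <-]; apply: rR; exists n.
  apply: (maxE (E `|` [set C'])).
  - split; first by move=> C EC; left.
    move=> sub; have EC' := sub C' (or_intror erefl); apply: (C'R (r 0%N)); first by exists 0%N.
    by exists C' => //; exists 0%N.
  - by move=> C [/ED|->].
  - move=> i j [Ei|->] [Ej|->] [z [iz jz]] //.
    + by apply: trE => //; exists z.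
    + by exfalso; apply: (C'R z jz); exists i.
    + by exfalso; apply: (C'R z iz); exists j.
have [C0 EC0] : E !=set0.
  apply/set0P/negP => /eqP E0; apply: infinite_nat.
  apply: (card_le_finite NK); apply: (sub_finite_set _ finR) => k _ [C EC _].
  by rewrite E0 in EC.
have hc : forall C : set K, exists bi : (nat -> K) * (K -> nat),
    E C -> (injective bi.1 /\ (forall n, C (bi.1 n))) /\ {in C &, injective bi.2}.
  move=> C; have [EC|nEC] := pselect (E C); last by exists (fun=> k0, fun=> 0%N).
  have := ED C EC; rewrite /D /= card_eq_le => /andP[CN NC].
  have [iota [iinj _]] := le_funP CN.
  have [b [binj bC]] := le_fun (a0 := 0%N) I NC.
  exists (b, iota) => _; split => //; split.
    by move=> x y /= bxy; apply: binj; rewrite ?inE.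
  by move=> n; apply: bC; exists n.
have [bi biP] := choice hc.
have [rho [rinj _]] := le_funP (finite_set_countable finR).
pose cls k := xget C0 [set C | E C /\ C k].
have clsP k : U k -> E (cls k) /\ cls k k.
  move=> [C EC Ck]; rewrite /cls. have := (@xgetPex _ C0 [set C | E C /\ C k] (ex_intro _ C (conj EC Ck))). by [].
pose f (kn : K * nat) := if pselect (U kn.1) is left _
  then (bi (cls kn.1)).1 (pr ((bi (cls kn.1)).2 kn.1) kn.2).*2
  else (bi C0).1 (pr (rho kn.1) kn.2).*2.+1.
exists f => -[k n] [k' n']; rewrite /f /=.
have disj : forall C C' x, E C -> E C' -> C x -> C' x -> C = C'.
  by move=> C C' x EC EC' Cx C'x; apply: trE => //; exists x.
case: pselect => Uk; case: pselect => Uk'.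
- have [Ec ck] := clsP _ Uk; have [Ec' ck'] := clsP _ Uk'.
  have [[bi1 bC] bi2] := biP _ Ec; have [[bi1' bC'] bi2'] := biP _ Ec'.
  move=> e.
  have cc : cls k = cls k'.
    apply: (disj _ _ ((bi (cls k)).1 (pr ((bi (cls k)).2 k) n).*2) Ec Ec'); first exact: bC.
    by rewrite e; apply: bC'.
  rewrite -cc in e; move/bi1: e => /(congr1 half); rewrite !doubleK => /pr_inj [e1 ->].
  by rewrite (bi2 k k') ?inE //; rewrite cc.
- have [Ec ck] := clsP _ Uk; have [[bi1 bC] bi2] := biP _ Ec.
  have [[bi10 bC0] _] := biP _ EC0.
  move=> e; have cc : cls k = C0.
    apply: (disj _ _ ((bi (cls k)).1 (pr ((bi (cls k)).2 k) n).*2) Ec EC0); first exact: bC.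
    by rewrite e; apply: bC0.
  rewrite cc in e; move/bi10: e => /(congr1 odd) /=; rewrite !odd_double; discriminate.
- have [Ec ck] := clsP _ Uk'; have [[bi1 bC] bi2] := biP _ Ec.
  have [[bi10 bC0] _] := biP _ EC0.
  move=> e; have cc : cls k' = C0.
    apply: (disj _ _ ((bi (cls k')).1 (pr ((bi (cls k')).2 k') n').*2) Ec EC0); first exact: bC.
    by rewrite -e; apply: bC0.
  rewrite cc in e; move/bi10: e => /(congr1 odd) /=; rewrite !odd_double; discriminate.
- have [[bi10 _] _] := biP _ EC0.
  move/bi10 => [] /(congr1 half); rewrite !doubleK => /pr_inj [e1 ->].
  by rewrite (rinj k k') ?inE.
Qed.


Lemma card_succ_finite (T : Type) (K : Type) (S : set T) :
  finite_set [set: K] -> card_succ_of K S -> finite_set S.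
Proof.
move=> /finite_setP [n Kn] [SK Ssub]; apply: contrapT => /infiniteP NS.
have [g [ginj gS]] := le_fun (a0 := 0%N) I NS.
pose S' := g @` `I_n.+1.
have S'S : S' `<=` S by move=> _ [k _ <-]; apply: gS; exists k.
have S'n : S' #= `I_n.+1.
  by apply: inj_card_eq => x y _ _; apply: ginj; rewrite inE.
have [S'K|S'S2] := Ssub S' S'S.
  have : `I_n.+1 #<= `I_n.
    rewrite -(card_le_eql S'n); apply: card_le_trans S'K _.
    by rewrite card_eq_le in Kn; case/andP: Kn.
  by rewrite card_le_II ltnn.
apply: (infiniteP S).2 => //.
by rewrite -(eq_finite_set S'S2) (eq_finite_set S'n); exact: finite_II.
Qed.

Lemma finite_case (X : uniformType) (K : Type) (A : set X) :
  hausdorff_space X -> finite_set [set: K] ->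
  uniformity_calibre_succ_omega X K -> weight_le A K.
Proof.
move=> hX finK cal.
pose Ent := [set E : set (X * X) | entourage E].
have EntK : Ent #<= [set: K].
  apply: contrapT => /exists_succ [S [SEnt Ssucc]].
  have [T [TS Tinf _]] := cal S SEnt Ssucc.
  have finT : finite_set T := sub_finite_set TS (card_succ_finite finK Ssucc).
  by apply: infinite_nat; rewrite -(eq_finite_set Tinf).
have finEnt : finite_set Ent := card_le_finite EntK finK.
have [s Es] := (finite_seqP Ent).1 finEnt.
pose D := foldr setI setT s.
have Dent : entourage (foldr setI setT s).
  have : forall E, E \in s -> entourage E.
    by move=> E Ein; have : [set` s] E by []; rewrite -Es.
  clear D; elim: s {Es} => [|E s IH] /= Hs; first exact: filterT.
  apply: filterI; first by apply: Hs; rewrite inE eqxx.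
  by apply: IH => F Fs; apply: Hs; rewrite inE Fs orbT.
have DA : forall E, entourage E -> foldr setI setT s `<=` E.
  move=> E entE; have : [set` s] E by rewrite -Es.
  rewrite /=.
  clear D; elim: s {Es Dent} => [//|F s IH] /=; rewrite inE => /orP[/eqP ->|Es].
    by move=> z [].
  by move=> z [_ /(IH Es)].
have Ddiag : forall x y, D (x, y) -> x = y.
  move=> x y Dxy; apply: close_eq hX _ _ _.
  by rewrite entourage_close => E entE; apply: DA.
have open1 : forall x : X, open [set x].
  move=> x; rewrite openE => _ ->; rewrite /interior /=.
  apply: filterS (nbhs_entourage x Dent) => z /xsectionP Dxz.
  by rewrite (Ddiag _ _ Dxz).
exists [set [set x] | x in A]; split.
  split.
    move=> _ [x Ax <-]; exists [set x]; split => //.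
    by apply/seteqP; split => [_ ->|_ [_ ->]].
  move=> O oO x Ax Ox; exists [set x]; split => //; first by exists x.
  by move=> _ ->.
apply: card_le_trans (card_image_le _ _) _.
apply: card_le_trans EntK.
apply: (@inj_le _ _ _ _ (fun x : X => D `|` ([set x] `*` ~` [set x]))).
  move=> x y; rewrite !inE => Ax Ay e; apply: contrapT => nxy.
  have : (D `|` ([set x] `*` ~` [set x])) (x, y) by right; split => // yx; apply: nxy.
  by rewrite e => -[/Ddiag xy|[/= xy _]]; apply: nxy.
move=> _ [x Ax <-]; rewrite /Ent /=.
by apply: filterS Dent => z Dz; left.
Qed.


Section Ent.
Variable X : uniformType.
Implicit Types E V U W : set (X * X).

Definition symm V := forall a b, V (a, b) -> V (b, a).

Lemma sym_split E : entourage E ->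
  exists V, [/\ entourage V, symm V & forall a b c, V (a, b) -> V (b, c) -> E (a, c)].
Proof.
move=> entE; exists (split_ent E `&` (split_ent E)^-1%relation); split.
- exact: entourage_invI (entourage_split_ent entE).
- by move=> a b [].
- by move=> a b c [ab _] [bc _]; apply: entourage_split ab bc.
Qed.

Lemma split3 E : entourage E ->
  exists V, [/\ entourage V, symm V &
    forall a b c d, V (a, b) -> V (b, c) -> V (c, d) -> E (a, d)].
Proof.
move=> entE; have [V1 [e1 s1 h1]] := sym_split entE.
have [V2 [e2 s2 h2]] := sym_split e1.
exists V2; split => // a b c d ab bc cd.
apply: h1 (h2 _ _ _ ab bc) (h2 _ _ _ cd (entourage_refl _ e2)).
Qed.

Definition U3 U : set (X * X) :=
  [set ab | exists u v, [/\ U (ab.1, u), U (u, v) & U (v, ab.2)]].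

Lemma U3_refl U a b : entourage U -> U (a, b) -> U3 U (a, b).
Proof.
by move=> eU ab; exists a, b; split => //; apply: entourage_refl.
Qed.

End Ent.

Lemma finite_powerset (T : eqType) (D : set T) (d : T) :
  finite_set D -> finite_set [set I | I `<=` D].
Proof.
move=> /finite_seqP [s Ds].
pose phi (I : set T) := [ffun i : 'I_(size s) => `[< I (nth d s i) >]].
apply: (@card_le_finite _ _ _ [set: {ffun 'I_(size s) -> bool}]); last first.
  exact: finite_finset.
apply: (@inj_le _ _ _ _ phi) => // I I'; rewrite !inE => ID I'D e.
have key : forall z, D z -> I z = I' z.
  move=> z Dz; have zs : z \in s by move: Dz; rewrite Ds.
  have iz : index z s < size s by rewrite index_mem.
  have := congr1 (fun f : {ffun 'I_(size s) -> bool} => f (Ordinal iz)) e.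
  rewrite /phi !ffunE /= nth_index //.
  by move=> ee; apply/propext; split => h; [move: ee; rewrite (asboolT h) => /esym /asboolP|move: ee; rewrite (asboolT h) => /asboolP].
apply/seteqP; split => z hz; first by rewrite -key //; apply: ID.
by rewrite key //; apply: I'D.
Qed.

Section Main.
Variables (X : uniformType) (K : Type) (A : set X).
Hypothesis tbA : totally_bounded_set A.

Local Notation Om := (set (X * X) * X)%type.

Definition adm (p : Om) := [/\ entourage p.1, symm p.1 & A p.2].
Definition bset (p : Om) : set X := A `&` interior (xsection p.1 p.2).
Definition relv (q p : Om) := bset q p.2.
Definition free (q p : Om) :=
  exists a b, [/\ A a, A b, q.1 (a, b) & ~ U3 p.1 (a, b)].

Definition MF (p : Om) (rec : forall q, wlt q p -> Prop) : Prop :=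
  adm p /\ forall q (h : wlt q p), rec q h -> relv q p -> free q p.

Definition M : set Om := Fix (@wlt_wf Om) (fun _ => Prop) MF.

Lemma M_eq p : M p = (adm p /\ forall q, wlt q p -> M q -> relv q p -> free q p).
Proof.
rewrite /M Fix_eq //= => x f g E; rewrite /MF.
congr (_ /\ _); apply/propext; split => H q h.
  by rewrite -E; exact: H.
by rewrite E; exact: H.
Qed.

Lemma M_adm p : M p -> adm p.
Proof. by rewrite M_eq => -[]. Qed.

Lemma M_base x O : A x -> open O -> O x ->
  exists p, [/\ M p, bset p x & bset p `<=` A `&` O].
Proof.
move=> Ax oO Ox; apply: contrapT => nH.
have : nbhs x O by apply: open_nbhs_nbhs; split.
move=> /nbhsP [E entE EO].
have [V [eV sV hV]] := sym_split entE.
have [U [eU sU hU]] := split3 eV.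
have U3V : forall a b, U3 U (a, b) -> V (a, b).
  by move=> a b [u [v [/= au uv vb]]]; apply: hU au uv vb.
pose p : Om := (U, x).
have bsub : forall q, M q -> bset q x -> ~ free q p -> bset q `<=` A `&` O.
  move=> q Mq [_ qx] nf y [Ay qy]; split => //; apply: EO => /=.
  have [_ _ Aq2] := M_adm Mq.
  have nf' : forall a b, A a -> A b -> q.1 (a, b) -> U3 U (a, b).
    move=> a b Aa Ab qab; apply: contrapT => nU; apply: nf.
    by exists a, b.
  have q2x : q.1 (q.2, x) by apply/xsectionP; exact: interior_subset qx.
  have q2y : q.1 (q.2, y) by apply/xsectionP; exact: interior_subset qy.
  apply/xsectionP; apply: (hV _ q.2).
    exact/sV/U3V/nf'.
  exact/U3V/nf'.
have Mp : M p.
  rewrite M_eq; split; first by split.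
  move=> q qp Mq rqp; apply: contrapT => nf.
  by apply: nH; exists q; split => //; apply: bsub.
apply: nH; exists p; split => //.
  by split => //; rewrite /interior /=; apply: nbhs_entourage.
move=> y [Ay pxy]; split => //; apply: EO => /=; apply/xsectionP.
have Uxy : U (x, y) by apply/xsectionP; exact: interior_subset pxy.
by apply: (hV _ y); [apply: U3V; apply: U3_refl | apply: entourage_refl].
Qed.

Lemma M_subspace_base : subspace_base A (bset @` M).
Proof.
split.
  move=> _ [p Mp <-]; exists (interior (xsection p.1 p.2)); split => //.
  exact: open_interior.
move=> O oO x Ax Ox; have [p [Mp px pO]] := M_base Ax oO Ox.
by exists (bset p); split => //; exists p.
Qed.

Lemma net_ex (U : set (X * X)) : exists t : set (X * X) * set X * (X -> nat),
  entourage U -> [/\ [/\ entourage t.1.1, symm t.1.1 &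
      forall a b c d, t.1.1 (a, b) -> t.1.1 (b, c) -> t.1.1 (c, d) -> U (a, d)],
    finite_set t.1.2, t.1.2 `<=` A,
    A `<=` \bigcup_(c in t.1.2) entourage_at t.1.1 c &
    {in t.1.2 &, injective t.2}].
Proof.
have [eU|neU] := pselect (entourage U); last by exists (setT, set0, fun=> 0%N).
have [V [eV sV hV]] := split3 eU.
have [F [finF FA AF]] := tbA eV.
have [j [jinj _]] := le_funP (finite_set_countable finF).
by exists (V, F, j) => _; split.
Qed.

Definition netf := projT1 (choice net_ex).
Lemma netfP U : entourage U ->
  [/\ [/\ entourage (netf U).1.1, symm (netf U).1.1 &
      forall a b c d, (netf U).1.1 (a, b) -> (netf U).1.1 (b, c) ->
        (netf U).1.1 (c, d) -> U (a, d)],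
    finite_set (netf U).1.2, (netf U).1.2 `<=` A,
    A `<=` \bigcup_(c in (netf U).1.2) entourage_at (netf U).1.1 c &
    {in (netf U).1.2 &, injective (netf U).2}].
Proof. exact: (projT2 (choice net_ex) U). Qed.

Definition ctr (p : Om) : X :=
  xget p.2 [set c | (netf p.1).1.2 c /\ (netf p.1).1.1 (c, p.2)].

Lemma ctrP p : M p -> (netf p.1).1.2 (ctr p) /\ (netf p.1).1.1 (ctr p, p.2).
Proof.
move=> Mp; have [eU _ Ap] := M_adm Mp.
have [_ _ _ AF _] := netfP eU.
have [c Fc cp] := AF _ Ap.
by have := @xgetPex _ p.2 [set c | (netf p.1).1.2 c /\ (netf p.1).1.1 (c, p.2)]
  (ex_intro _ c (conj Fc cp)).
Qed.

Lemma fiber_key p p' : M p -> M p' -> p.1 = p'.1 -> ctr p = ctr p' -> ~ wlt p p'.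
Proof.
move=> Mp Mp' e1 ec pp'.
have [eU sU Ap] := M_adm Mp; have [_ _ Ap'] := M_adm Mp'.
have [[eV sV hV] _ _ _ _] := netfP eU.
have [_ cp] := ctrP Mp; have [_ cp'] := ctrP Mp'.
rewrite -e1 -ec in cp'.
have rel : relv p p'.
  split => //; rewrite /interior /=.
  apply: filterS (nbhs_entourage p'.2 eV) => z /xsectionP p'z.
  apply/xsectionP; exact: hV (sV _ _ cp) cp' p'z.
have := Mp'; rewrite M_eq => -[_ /(_ p pp' Mp rel) [a [b [Aa Ab pab nU]]]].
by apply: nU; rewrite -e1; apply: U3_refl.
Qed.

Lemma fiber_inj p p' : M p -> M p' -> p.1 = p'.1 ->
  (netf p.1).2 (ctr p) = (netf p'.1).2 (ctr p') -> p = p'.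
Proof.
move=> Mp Mp' e1 ej.
have [eU _ _] := M_adm Mp.
have [_ _ _ _ jinj] := netfP eU.
have ec : ctr p = ctr p'.
  apply: jinj; rewrite ?inE; first exact: (ctrP Mp).1.
    by rewrite e1; exact: (ctrP Mp').1.
  by rewrite ej e1.
apply: contrapT => npp'; have [h|h] := wlt_total npp'.
  exact: fiber_key Mp Mp' e1 ec h.
exact: fiber_key Mp' Mp (esym e1) (esym ec) h.
Qed.

Lemma small_case : [set: nat] #<= [set: K] -> (fst @` M) #<= [set: K] -> weight_le A K.
Proof.
move=> NK PK; exists (bset @` M); split; first exact: M_subspace_base.
apply: card_le_trans (card_image_le _ _) _.
have [M0|nM0] := pselect (M = set0); first by rewrite M0; apply: card_ge0.
have [p0 Mp0] : M !=set0 by apply/set0P/eqP.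
have [f1 [f1inj _]] := le_fun (ex_intro2 _ _ p0 Mp0 erefl) PK.
have [f2 f2inj] := absorb_nat NK.
apply: (@inj_le _ _ _ _ (fun p => f2 (f1 p.1, (netf p.1).2 (ctr p)))) => //.
move=> p p'; rewrite !inE => Mp Mp' /f2inj [e1 ej].
have e1' : p.1 = p'.1.
  by apply: f1inj; [rewrite inE; exists p|rewrite inE; exists p'|].
exact: fiber_inj.
Qed.

Lemma large_case : uniformity_calibre_succ_omega X K -> (fst @` M) #<= [set: K].
Proof.
move=> cal; apply: contrapT => /exists_succ [S [SM Ssucc]].
have Sent : S `<=` entourage by move=> V /SM [p Mp <-]; have [] := M_adm Mp.
have [T [TS Tinf [W [eW WT]]]] := cal S Sent Ssucc.
have NT : [set: nat] #<= T.
  by move: Tinf; rewrite /countably_infinite card_eq_sym card_eq_le => /andP[].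
have [e [einj eT]] := le_funP NT.
have eT' n : T (e n) by apply: eT; exists n.
have pex n : exists q, M q /\ q.1 = e n.
  by have [q Mq qe] := SM _ (TS _ (eT' n)); exists q.
have [p0 [Mp0 _]] := pex 0%N.
pose p n := xget p0 [set q | M q /\ q.1 = e n].
have pP n : M (p n) /\ (p n).1 = e n by exact: (xgetPex p0 (pex n)).
have [W1 [eW1 sW1 hW1]] := split3 eW.
have [F1 [finF1 F1A AF1]] := tbA eW1.
pose cl y := xget y [set c | F1 c /\ W1 (c, y)].
have clP y : A y -> F1 (cl y) /\ W1 (cl y, y).
  move=> Ay; have [c Fc cy] := AF1 _ Ay.
  by have := @xgetPex _ y [set c | F1 c /\ W1 (c, y)] (ex_intro _ c (conj Fc cy)).
have close y y' : A y -> A y' -> cl y = cl y' -> W (y, y').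
  move=> Ay Ay' ec; apply: (hW1 y (cl y) y' y').
  - exact/sW1/(clP _ Ay).2.
  - by rewrite ec; exact: (clP _ Ay').2.
  - exact: entourage_refl.
have WU n : W `<=` (p n).1 by rewrite (pP n).2; apply: WT.
pose x n := (p n).2.
have Ax n : A (x n) by have [_ _] := M_adm (pP n).1.
have rel n m : cl (x n) = cl (x m) -> relv (p n) (p m).
  move=> ecl; split; first exact: Ax.
  rewrite /interior /=; apply: filterS (nbhs_entourage (x m) eW1) => z /xsectionP mz.
  apply/xsectionP; apply: WU; apply: (hW1 _ (cl (x n)) (x m) z) => //.
    exact/sW1/(clP _ (Ax n)).2.
  by rewrite ecl; exact: (clP _ (Ax m)).2.
pose Pr n m := xget (x n, x n)
  [set ab | [/\ A ab.1, A ab.2, (p n).1 (ab.1, ab.2) & ~ U3 (p m).1 (ab.1, ab.2)]].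
have PrP n m : wlt (p n) (p m) -> cl (x n) = cl (x m) ->
    [/\ A (Pr n m).1, A (Pr n m).2, (p n).1 ((Pr n m).1, (Pr n m).2) &
       ~ U3 (p m).1 ((Pr n m).1, (Pr n m).2)].
  move=> nm ecl; have := (pP m).1; rewrite M_eq => -[_ /(_ _ nm (pP n).1 (rel _ _ ecl))].
  move=> [a [b [Aa Ab nab nU]]].
  by have := @xgetPex _ (x n, x n) [set ab | [/\ A ab.1, A ab.2, (p n).1 (ab.1, ab.2) &
    ~ U3 (p m).1 (ab.1, ab.2)]] (ex_intro _ (a, b) (And4 Aa Ab nab nU)).
pose col n m := (cl (Pr n m).1, cl (Pr n m).2).
pose In m := [set k | exists n, [/\ wlt (p n) (p m), cl (x n) = cl (x m) & col n m = k]].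
pose Phi m := (cl (x m), In m).
have key m m' : wlt (p m) (p m') -> Phi m = Phi m' -> False.
  move=> mm' [ecl eIn].
  have : In m' (col m m') by exists m.
  rewrite -eIn => -[h [hm ehm ecol]].
  have [Aa Ab _ nU] := PrP h m hm ehm.
  have [Aa' Ab' Uab' _] := PrP m m' mm' ecl.
  apply: nU; exists (Pr m m').1, (Pr m m').2; split => //=.
    apply: WU; apply: close => //; exact: (congr1 fst ecol).
  apply: WU; apply: close => //; exact: (esym (congr1 snd ecol)).
have Phi_inj : injective Phi.
  move=> m m' ePhi; apply: contrapT => nmm'.
  have npp : p m <> p m'.
    move=> epp; apply: nmm'; apply: einj; rewrite ?inE //.
    by rewrite -(pP m).2 -(pP m').2 epp.
  by case: (wlt_total npp) => h; [exact: key h ePhi | exact: key h (esym ePhi)].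
have fin : finite_set (F1 `*` [set I | I `<=` F1 `*` F1]).
  apply: (finite_setX finF1).
  exact: (finite_powerset (x 0%N, x 0%N) (finite_setX finF1 finF1)).
apply: infinite_nat; apply: (card_le_finite _ fin).
apply: (@inj_le _ _ _ _ Phi); first by move=> m m' _ _; exact: Phi_inj.
move=> _ [m _ <-]; split; first exact: (clP _ (Ax m)).1.
move=> k [n [nm ecl <-]]; have [Aa Ab _ _] := PrP n m nm ecl.
by split; [exact: (clP _ Aa).1|exact: (clP _ Ab).1].
Qed.

End Main.


Unset Implicit Arguments.
Local Close Scope card_scope.

Theorem mainTheorem8 (X : uniformType) (K : Type) (A : set X) :
  hausdorff_space X ->
  totally_bounded_set A ->
  uniformity_calibre_succ_omega X K ->
  weight_le A K.
Proof.
move=> hX tbA cal.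
have [finK|infK] := pselect (finite_set [set: K]).
  exact: finite_case.
have NK := (infiniteP _).1 infK.
exact: (small_case tbA NK (large_case tbA cal)).
Qed.
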